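(* Let $T$ be a lifted graph, $F\colon T\to T$ a continuous sun-like map of degree 1, ${\cal P}$ a basic partition of $F$ and ${\cal G}$ its covering graph. Let $\alpha=A_0\dots A_n/\!\sim$ be a vertex of ${\cal G}$ (with $A_0,\dots,A_n\in{\cal P}$) and let $\alpha\to\beta$ be an arrow in ${\cal G}$. Then there exists $A_{n+1}\in{\cal P}$ such that $\beta=A_0\dots A_nA_{n+1}/\!\sim$.
   Context: A lifted graph is a connected topological space $T$ with a homeomorphism $h\colon\mathbb R\to h(\mathbb R)\subset T$ and a homeomorphism $\tau\colon T\to T$ such that $\tau(h(x))=h(x+1)$, the closure of each connected component of $T\setminus h(\mathbb R)$ is a topological finite graph meeting $h(\mathbb R)$ in exactly one point, and only finitely many such components have closure meeting $h([0,1])$. Identify $h(\mathbb R)$ with $\mathbb R$, write $x+m:=\tau^m(x)$; $r_{\mathbb R}\colon T\to\mathbb R$ is the identity on $\mathbb R$ and maps a component $C$ of $T\setminus\mathbb R$ to the point $\overline C\cap\mathbb R$. $F$ has degree 1 if $F(x+1)=F(x)+1$. Let $T_{\mathbb R}:=\overline{\bigcup_{n\ge0}F^n(\mathbb R)}$, $X:=\overline{T\setminus T_{\mathbb R}}\cap r_{\mathbb R}^{-1}([0,1))$. $F$ is sun-like if $(T\setminus T_{\mathbb R})\cap r_{\mathbb R}^{-1}([0,1))$ consists of finitely many intervals with pairwise disjoint closures $X^i$, $i\in\Lambda$ (branches), each a compact interval meeting $T_{\mathbb R}$ in one endpoint $\min X^i$ (fixing the order of $X^i$). A basic partition is a finite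 family ${\cal P}=\{X^i_j\}$ of pairwise disjoint nonempty compact intervals $X^i_1<\dots<X^i_{N_i}$ in $X^i$, with $\ell(X^i_j)\in\Lambda$, $p(X^i_j)\in\mathbb Z$, such that $F(X^i_j)\subset(X^{\ell(X^i_j)}+p(X^i_j))\cup\mathrm{Int}(T_{\mathbb R})$, $F(\min X^i_j)=\min X^{\ell(X^i_j)}+p(X^i_j)$, and $F(X\setminus\bigcup X^i_j)\cap(X+\mathbb Z)=\emptyset$. For $A_0,\dots,A_n\in{\cal P}$, $\langle A_0\dots A_n\rangle:=F^n(\{x\in T: F^i(x)\in A_i+\mathbb Z,\ 0\le i\le n\})\cap X$. $A_0\dots A_n\sim B_0\dots B_m$ iff for some $k\le\min(n,m)$, $A_{n-i}=B_{m-i}$ ($0\le i\le k$) and $\langle A_0\dots A_{n-k}\rangle=A_{n-k}=B_{m-k}=\langle B_0\dots B_{m-k}\rangle$ (an equivalence relation). The covering graph ${\cal G}$: vertices are classes $A_0\dots A_n/\!\sim$ with $\langle A_0\dots A_n\rangle\ne\emptyset$; an arrow $\alpha\to\beta$ exists iff $\alpha=B_0\dots B_m/\!\sim$ and $\beta=B_0\dots B_mB_{m+1}/\!\sim$ for some $B_0,\dots,B_{m+1}\in{\cal P}$. *)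

(* Defs.v *)
From HB Require Import structures.
From mathcomp Require Import all_boot all_order all_algebra.
From mathcomp Require Import all_classical all_reals all_analysis.
From mathcomp Require Import Rstruct Rstruct_topology.
Set Implicit Arguments. Unset Strict Implicit. Unset Printing Implicit Defensive.
Import Order.TTheory GRing.Theory Num.Theory.
Local Open Scope classical_set_scope.
Local Open Scope ring_scope.

Notation RR := Rdefinitions.R.

Section LiftedGraphs.
Variable T : topologicalType.

Definition embedding (f : RR -> T) :=
  [/\ continuous f, injective f &
      forall U : set RR, open U -> exists V : set T, open V /\ f @` U = V `&` range f].

Definition arc_map (e : RR -> T) :=
  [/\ {within `[0, 1]%classic, continuous e}, set_inj `[0, 1]%classic e &
      forall U : set RR, open U -> exists V : set T,
         open V /\ e @` (U `&` `[0, 1]%classic) = V `&` e @` `[0, 1]%classic].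

Definition finite_graph (G : set T) :=
  exists (m : nat) (pt : nat -> T) (k : nat) (e : nat -> RR -> T),
    [/\ forall i, (i < k)%N -> arc_map (e i),
        G = pt @` `I_m `|` \bigcup_(i in `I_k) (e i @` `[0, 1]%classic) &
        forall i j, (i < k)%N -> (j < k)%N -> i <> j ->
          forall s t : RR, `[0, 1]%classic s -> `[0, 1]%classic t -> e i s = e j t ->
            (s = 0 \/ s = 1) /\ (t = 0 \/ t = 1)].

(* x + m := tau^m x  for m : int, taui being the inverse of tau *)
Definition shift (tau taui : T -> T) (m : int) (x : T) : T :=
  match m with Posz n => iter n tau x | Negz n => iter n.+1 taui x end.

Definition comp (h : RR -> T) (x : T) := connected_component (~` range h) x.

Definition lifted_graph (h : RR -> T) (tau taui : T -> T) :=
  [/\ connected [set: T] /\ embedding h,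
      [/\ continuous tau, continuous taui, cancel tau taui & cancel taui tau],
      (forall x : RR, tau (h x) = h (x + 1)),
      (forall x, ~ range h x ->
          finite_graph (closure (comp h x)) /\
          exists t : RR, closure (comp h x) `&` range h = [set h t]) &
      finite_set [set C : set T | exists x, [/\ ~ range h x, C = comp h x &
                         closure C `&` (h @` `[0, 1]%classic) !=set0]]].

(* r_R^{-1}(I) for I a subset of R *)
Definition rpre (h : RR -> T) (I : set RR) : set T :=
  [set x | (exists t, I t /\ h t = x) \/
           (~ range h x /\ exists t, I t /\ closure (comp h x) (h t))].

Definition degree_one (tau F : T -> T) := forall x, F (tau x) = tau (F x).

Definition TR (h : RR -> T) (F : T -> T) : set T :=
  closure (\bigcup_(n in [set: nat]) (iter n F @` range h)).

Definition Xset (h : RR -> T) (F : T -> T) : set T :=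
  closure (~` TR h F) `&` rpre h `[0, 1[%classic.

(* F is sun-like, the branches being X^i = phi i @` [0,1] for i < N,
   with min X^i = phi i 0 (this fixes the order on X^i). *)
Definition sun_like (h : RR -> T) (F : T -> T) (N : nat) (phi : nat -> RR -> T) :=
  [/\ forall i, (i < N)%N -> arc_map (phi i),
      (~` TR h F) `&` rpre h `[0, 1[%classic = \bigcup_(i in `I_N) (phi i @` `]0, 1]%classic),
      (forall i j, (i < N)%N -> (j < N)%N -> i <> j ->
         phi i @` `[0, 1]%classic `&` phi j @` `[0, 1]%classic = set0) &
      (forall i, (i < N)%N -> phi i @` `[0, 1]%classic `&` TR h F = [set phi i 0])].

(* basic partition: for i < N the intervals X^i_j = phi i @` [a i j, b i j],
   j < Ni i, in increasing order; ell i j and p i j as in the paper *)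
Definition Pset (phi : nat -> RR -> T) (a b : nat -> nat -> RR) (A : nat * nat) : set T :=
  phi A.1 @` `[a A.1 A.2, b A.1 A.2]%classic.

Definition inP (N : nat) (Ni : nat -> nat) (A : nat * nat) := (A.1 < N)%N && (A.2 < Ni A.1)%N.

Definition basic_partition (h : RR -> T) (tau taui F : T -> T) (N : nat)
    (phi : nat -> RR -> T) (Ni : nat -> nat) (a b : nat -> nat -> RR)
    (ell : nat -> nat -> nat) (p : nat -> nat -> int) :=
  [/\ (forall i j, (i < N)%N -> (j < Ni i)%N -> [/\ 0 <= a i j, a i j <= b i j & b i j <= 1]) /\
      (forall i j, (i < N)%N -> (j.+1 < Ni i)%N -> b i j < a i j.+1),
      (forall i j, (i < N)%N -> (j < Ni i)%N -> (ell i j < N)%N),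
      (forall i j, (i < N)%N -> (j < Ni i)%N ->
         F @` Pset phi a b (i, j) `<=`
           (shift tau taui (p i j) @` (phi (ell i j) @` `[0, 1]%classic)) `|` interior (TR h F)),
      (forall i j, (i < N)%N -> (j < Ni i)%N ->
         F (phi i (a i j)) = shift tau taui (p i j) (phi (ell i j) 0)) &
      (F @` (Xset h F `\` \bigcup_(A in [set A | inP N Ni A]) Pset phi a b A)
        `&` [set shift tau taui m x | m in [set: int] & x in Xset h F] = set0)].

Definition PZ (tau taui : T -> T) (phi : nat -> RR -> T) (a b : nat -> nat -> RR)
    (A : nat * nat) : set T :=
  [set shift tau taui m x | m in [set: int] & x in Pset phi a b A].

Definition cyl (h : RR -> T) (tau taui F : T -> T) (phi : nat -> RR -> T)
    (a b : nat -> nat -> RR) (w : seq (nat * nat)) : set T :=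
  (iter (size w).-1 F @`
     [set x | forall i, (i < size w)%N -> PZ tau taui phi a b (nth (0,0)%N w i) (iter i F x)])
  `&` Xset h F.

Definition sim (h : RR -> T) (tau taui F : T -> T) (phi : nat -> RR -> T)
    (a b : nat -> nat -> RR) (w v : seq (nat * nat)) : Prop :=
  let n := (size w).-1 in let m := (size v).-1 in
  exists k, [/\ (k <= minn n m)%N,
    (forall i, (i <= k)%N -> nth (0,0)%N w (n - i) = nth (0,0)%N v (m - i)),
    cyl h tau taui F phi a b (take (n - k).+1 w) = Pset phi a b (nth (0,0)%N w (n - k)),
    Pset phi a b (nth (0,0)%N w (n - k)) = Pset phi a b (nth (0,0)%N v (m - k)) &
    Pset phi a b (nth (0,0)%N v (m - k)) = cyl h tau taui F phi a b (take (m - k).+1 v)].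

Definition word (N : nat) (Ni : nat -> nat) (w : seq (nat * nat)) :=
  w <> [::] /\ all (inP N Ni) w.

Definition cls (N : nat) (Ni : nat -> nat) (h : RR -> T) (tau taui F : T -> T)
    (phi : nat -> RR -> T) (a b : nat -> nat -> RR) (w : seq (nat * nat)) :
    set (seq (nat * nat)) :=
  [set v | word N Ni v /\ sim h tau taui F phi a b w v].

Definition vertex N Ni h tau taui F phi a b (al : set (seq (nat * nat))) :=
  exists w, [/\ word N Ni w, cyl h tau taui F phi a b w !=set0 &
                al = cls N Ni h tau taui F phi a b w].

Definition arrow N Ni h tau taui F phi a b (al be : set (seq (nat * nat))) :=
  [/\ vertex N Ni h tau taui F phi a b al, vertex N Ni h tau taui F phi a b be &
      exists w B, [/\ word N Ni w, inP N Ni B,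
        al = cls N Ni h tau taui F phi a b w &
        be = cls N Ni h tau taui F phi a b (rcons w B)]].

End LiftedGraphs.

(* Main.v *)
Require Import Defs.
From HB Require Import structures.
From mathcomp Require Import all_boot all_order all_algebra.
From mathcomp Require Import all_classical all_reals all_analysis.
From mathcomp Require Import Rstruct Rstruct_topology.
From mathcomp Require Import zify ring lra.
Set Implicit Arguments. Unset Strict Implicit. Unset Printing Implicit Defensive.
Import Order.TTheory GRing.Theory Num.Theory.
Local Open Scope classical_set_scope.
Local Open Scope ring_scope.

Lemma shS (T : topologicalType) (tau taui : T -> T) : cancel tau taui -> cancel taui tau ->
  forall m x, Defs.shift tau taui (m + 1) x = tau (Defs.shift tau taui m x).
Proof.
move=> c1 c2 [k|k] x.
- have -> : (Posz k + 1 = Posz k.+1)%R by lia.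
  by [].
- case: k => [|k].
  + have -> : (Negz 0 + 1 = Posz 0)%R by lia.
    by rewrite /= c2.
  + have -> : (Negz k.+1 + 1 = Negz k)%R by lia.
    by rewrite /= c2.
Qed.

Lemma shP (T : topologicalType) (tau taui : T -> T) : cancel tau taui -> cancel taui tau ->
  forall m x, Defs.shift tau taui (m - 1) x = taui (Defs.shift tau taui m x).
Proof.
move=> c1 c2 [k|k] x.
- case: k => [|k].
  + have -> : (Posz 0 - 1 = Negz 0)%R by lia.
    by [].
  + have -> : (Posz k.+1 - 1 = Posz k)%R by lia.
    by rewrite /= c1.
- have -> : (Negz k - 1 = Negz k.+1)%R by lia.
  by [].
Qed.

Lemma sh_add (T : topologicalType) (tau taui : T -> T) : cancel tau taui -> cancel taui tau ->
  forall m n x, Defs.shift tau taui m (Defs.shift tau taui n x) = Defs.shift tau taui (m + n) x.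
Proof.
move=> c1 c2 [k|k] n x.
- elim: k => [|k IH]; first by rewrite add0r.
  have -> : (Posz k.+1 + n = (Posz k + n) + 1)%R by lia.
  by rewrite shS // -IH.
- elim: k => [|k IH].
  + have -> : (Negz 0 + n = n - 1)%R by lia.
    by rewrite shP.
  + have -> : (Negz k.+1 + n = (Negz k + n) - 1)%R by lia.
    by rewrite shP // -IH.
Qed.

Lemma sh_comm (T : topologicalType) (tau taui F : T -> T) : cancel tau taui -> cancel taui tau ->
  (forall x, F (tau x) = tau (F x)) ->
  forall m x, F (Defs.shift tau taui m x) = Defs.shift tau taui m (F x).
Proof.
move=> c1 c2 dF.
have dFi : forall x, F (taui x) = taui (F x).
  by move=> x; rewrite -{2}(c2 x) dF c1.
move=> [k|k] x /=.
- by elim: k => [|k IH] //=; rewrite dF IH.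
- by elim: k => [|k IH] //=; rewrite dFi // IH.
Qed.

Lemma sh_iter (T : topologicalType) (tau taui F : T -> T) : cancel tau taui -> cancel taui tau ->
  (forall x, F (tau x) = tau (F x)) ->
  forall i m x, iter i F (Defs.shift tau taui m x) = Defs.shift tau taui m (iter i F x).
Proof.
move=> c1 c2 dF; elim=> [|i IH] m x //=.
by rewrite IH sh_comm.
Qed.
Lemma iter_cont (T : topologicalType) (f : T -> T) n : continuous f -> continuous (iter n f).
Proof.
move=> cf; elim: n => [|n IH] x /=; first exact: cvg_id.
exact: (continuous_comp (IH x) (cf _)).
Qed.

Lemma cont_closure (T : topologicalType) (g : T -> T) (S : set T) y :
  continuous g -> closure S y -> closure (g @` S) (g y).
Proof.
move=> cg Sy B nB.
have := cg y B nB => /Sy [z [Sz Bz]].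
by exists (g z); split => //; exists z.
Qed.

Lemma comp_image (T : topologicalType) (h : RR -> T) (g : T -> T) z y :
  continuous g -> (forall u, ~ range h u -> ~ range h (g u)) ->
  Defs.comp h z y -> Defs.comp h (g z) (g y).
Proof.
move=> cg hg [C [Cz CA cC] Cy].
have : g @` C `<=` Defs.comp h (g z).
  apply: connected_component_max.
  - by exists z.
  - by move=> _ [u Cu <-]; apply: hg; apply: CA.
  - apply: connected_continuous_connected => //.
    exact: continuous_subspaceT.
by apply; exists y.
Qed.

Lemma int_small (m : int) (t t' : RR) : 0 <= t -> t < 1 -> 0 <= t' -> t' < 1 ->
  t' = t + m%:~R -> m = 0.
Proof.
move=> t0 t1 t'0 t'1 e.
have h1 : (m%:~R : RR) < 1 by rewrite e in t'1; lra.
have h2 : ((-m)%:~R : RR) < 1 by rewrite mulrNz; lra.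
rewrite ltrz1 in h1; rewrite ltrz1 in h2; lia.
Qed.

Lemma sh_h (T : topologicalType) (h : RR -> T) (tau taui : T -> T) :
  (forall x, tau (h x) = h (x + 1)) -> cancel tau taui ->
  forall m t, Defs.shift tau taui m (h t) = h (t + m%:~R).
Proof.
move=> th c1.
have thi : forall t, taui (h t) = h (t - 1).
  by move=> t; rewrite -{1}(subrK 1 t) -th c1.
move=> [k|k] t /=.
- elim: k => [|k IH] /=; first by rewrite addr0.
  rewrite IH th; congr h; rewrite -addrA; congr (_ + _).
  by rewrite -!pmulrn mulrS addrC.
- rewrite NegzE mulrNz.
  elim: k => [|k IH] /=; first by rewrite thi.
  rewrite IH thi; congr h.
  rewrite -!pmulrn mulrS.
  lra.
Qed.
Lemma rpre_sh (T : topologicalType) (h : RR -> T) (tau taui : T -> T) m z :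
  lifted_graph h tau taui ->
  rpre h `[0, 1[%classic z -> rpre h `[0, 1[%classic (Defs.shift tau taui m z) -> m = 0.
Proof.
move=> [[_ [_ hinj _]] [ct cti c1 c2] th Hcomp _].
set g := Defs.shift tau taui m.
have shh := sh_h th c1.
have cg : continuous g.
  by case: m @g => k; apply: iter_cont.
have shK : forall u, Defs.shift tau taui (- m) (g u) = u.
  by move=> u; rewrite /g sh_add // addNr.
have hr : forall u, ~ range h u -> ~ range h (g u).
  move=> u nu [t _ ht]; apply: nu; exists (t + (- m)%:~R) => //.
  by rewrite -shh ht shK.
have cl : forall u y, ~ range h u -> closure (Defs.comp h u) y ->
    closure (Defs.comp h (g u)) (g y).
  move=> u y nu cy.
  have := cont_closure cg cy; apply: closureS.
  by move=> _ [v cv <-]; apply: comp_image.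
have fin : forall t t' : RR, `[0, 1[%classic t -> `[0, 1[%classic t' -> t' = t + m%:~R -> m = 0.
  move=> t t'; rewrite /= !in_itv /= => /andP[t0 t1] /andP[t'0 t'1].
  move=> e; exact: (int_small t0 t1 t'0 t'1 e).
case=> [[t [It <-]]|[nz [t [It ct0]]]].
- rewrite /g shh; case=> [[t' [It' /hinj]]|[nr _]].
  + move=> e; exact: (fin t t' It It' e).
  + by exfalso; apply: nr; exists (t + m%:~R).
- case=> [[t' [_ et']]|[_ [t' [It' ct']]]].
  + by exfalso; apply: (hr z nz); exists t'.
  + have := cl z (h t) nz ct0; rewrite /g shh => ct1.
    have [_ [t1 E]] := Hcomp _ (hr z nz).
    have : (closure (Defs.comp h (g z)) `&` range h) (h t') by split => //; exists t'.
    have : (closure (Defs.comp h (g z)) `&` range h) (h (t + m%:~R)).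
      by split => //; exists (t + m%:~R).
    rewrite E => e1 e2.
    have e3 : t' = t + m%:~R.
      by apply: hinj; move: e1 e2; rewrite /set1 /mkset => -> ->.
    exact: (fin t t' It It' e3).
Qed.
Lemma phi_X (T : topologicalType) (h : RR -> T) (tau taui F : T -> T) (N : nat)
  (phi : nat -> RR -> T) i s :
  lifted_graph h tau taui -> sun_like h F N phi -> (i < N)%N -> 0 <= s -> s <= 1 ->
  Xset h F (phi i s).
Proof.
move=> LG [parc Hsun _ _] iN s0 s1.
have [[_ [_ hinj _]] _ _ Hcomp _] := LG.
have [carc _ _] := parc i iN.
have rTR : forall t, TR h F (h t).
  move=> t; apply: subset_closure; exists 0%N => //; exists (h t) => //; exists t.
have pos : forall s', 0 < s' -> s' <= 1 -> (~` TR h F `&` rpre h `[0,1[%classic) (phi i s').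
  move=> s' s'0 s'1; rewrite Hsun; exists i => //; exists s' => //.
  by rewrite /= in_itv /= s'0 s'1.
have x1 := pos 1 ltr01 (lexx 1).
set x := phi i 1 in x1.
have nrx : ~ range h x by move=> [t _ ht]; apply: x1.1; rewrite -ht.
have sub : phi i @` `]0,1]%classic `<=` Defs.comp h x.
  move=> _ [s' Is' <-].
  move: Is'; rewrite /= in_itv /= => /andP[s'0 s'1].
  have : phi i @` `[s', 1]%classic `<=` Defs.comp h x.
    apply: connected_component_max.
    - by exists 1 => //; rewrite /= in_itv /= s'1 lexx.
    - move=> _ [r Ir <-]; move: Ir; rewrite /= in_itv /= => /andP[r0 r1].
      have := pos r (lt_le_trans s'0 r0) r1 => -[nT _] [t _ ht]; apply: nT.
      by rewrite -ht.
    - apply: connected_continuous_connected; first exact: segment_connected.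
      apply: continuous_subspaceW carc => r; rewrite /= !in_itv /= => /andP[r0 r1].
      by rewrite r1 andbT; apply: le_trans r0; apply: ltW.
  by apply; exists s' => //; rewrite /= in_itv /= lexx s'1.
have cl0 : closure (phi i @` `]0,1]%classic) (phi i 0).
  move=> U nU.
  have I0 : `[0, 1]%classic (0 : RR) by rewrite /= in_itv /= lexx ler01.
  have := (subspace_continuousP _ _).1 carc 0 I0 U nU.
  move=> /nbhs_ballP [e e0 He].
  set r := Num.min (e / 2) 1.
  have r0 : 0 < r by rewrite lt_min ltr01 andbT divr_gt0.
  have r1 : r <= 1 by rewrite ge_min lexx orbT.
  have re : r <= e / 2 by rewrite ge_min lexx.
  exists (phi i r); split.
  - by exists r => //; rewrite /= in_itv /= r0 r1.
  - apply: (He r); last by rewrite /= in_itv /= r1 ltW.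
    rewrite /ball /= sub0r normrN ger0_norm ?ltW //.
    lra.
have clT : closure (~` TR h F) (phi i 0).
  apply: closureS cl0 => _ [s' Is' <-].
  move: Is'; rewrite /= in_itv /= => /andP[s'0 s'1].
  by have [] := pos s' s'0 s'1.
move: s0; rewrite le_eqVlt => /orP[/eqP <-|spos]; last first.
  have [] := pos s spos s1 => nT rs; split => //.
  exact: subset_closure.
split => //.
have [[t [_ ht]]|[_ [t0 [It0 ct0]]]] := x1.2.
  by exfalso; apply: nrx; exists t.
have clx : closure (Defs.comp h x) (phi i 0) := closureS sub cl0.
have [_ [t1 E]] := Hcomp x nrx.
have e2 : (closure (Defs.comp h x) `&` range h) (h t0) by split => //; exists t0.
case: (pselect (range h (phi i 0))) => [[t _ ht]|nr0].
  left; exists t; split => //.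
  have e1 : (closure (Defs.comp h x) `&` range h) (h t) by split; [rewrite ht|exists t].
  rewrite E in e1 e2.
  have -> : t = t0 by apply: hinj; move: e1 e2; rewrite /set1 /mkset => -> ->.
  exact: It0.
right; split => //; exists t0; split => //.
have cc : Defs.comp h (phi i 0) x.
  have : phi i @` `[0, 1]%classic `<=` Defs.comp h (phi i 0).
    apply: connected_component_max.
    - by exists 0 => //; rewrite /= in_itv /= lexx ler01.
    - move=> _ [r Ir <-]; move: Ir; rewrite /= in_itv /= => /andP[r0 r1].
      move: r0; rewrite le_eqVlt => /orP[/eqP <-|rpos] //.
      have := pos r rpos r1 => -[nT _] [t _ ht]; apply: nT.
      by rewrite -ht.
    - apply: connected_continuous_connected => //; exact: segment_connected.
  by apply; exists 1 => //; rewrite /= in_itv /= ler01 lexx.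
by rewrite /Defs.comp (same_connected_component cc).
Qed.
Lemma PZ_sh (T : topologicalType) (tau taui : T -> T) phi a b A m x :
  cancel tau taui -> cancel taui tau ->
  PZ tau taui phi a b A x -> PZ tau taui phi a b A (Defs.shift tau taui m x).
Proof.
move=> c1 c2 [k _ [y Py <-]].
by exists (m + k) => //; exists y => //; rewrite sh_add.
Qed.

Lemma P_X (T : topologicalType) (h : RR -> T) (tau taui F : T -> T)
    (N : nat) (phi : nat -> RR -> T) (Ni : nat -> nat) (a b : nat -> nat -> RR)
    (ell : nat -> nat -> nat) (p : nat -> nat -> int) A :
  lifted_graph h tau taui -> sun_like h F N phi ->
  basic_partition h tau taui F N phi Ni a b ell p -> inP N Ni A ->
  Pset phi a b A `<=` Xset h F.
Proof.
move=> LG SL [[Hab _] _ _ _ _] /andP[iN jN] _ [s Is <-].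
have [a0 ab b1] := Hab _ _ iN jN.
move: Is; rewrite /= in_itv /= => /andP[aS sb].
apply: (phi_X LG SL iN).
- exact: le_trans aS.
- exact: le_trans b1.
Qed.

Lemma cyl1 (T : topologicalType) (h : RR -> T) (tau taui F : T -> T)
    (N : nat) (phi : nat -> RR -> T) (Ni : nat -> nat) (a b : nat -> nat -> RR)
    (ell : nat -> nat -> nat) (p : nat -> nat -> int) A :
  lifted_graph h tau taui -> sun_like h F N phi ->
  basic_partition h tau taui F N phi Ni a b ell p -> inP N Ni A ->
  cyl h tau taui F phi a b [:: A] = Pset phi a b A.
Proof.
move=> LG SL BP iA.
have PX := P_X LG SL BP iA.
apply/seteqP; split.
- move=> _ [[x Hx <-] Xx] /=.
  have [m _ [y Py ey]] := Hx 0%N isT.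
  simpl in ey.
  have Xy := PX _ Py.
  have m0 : m = 0.
    apply: (rpre_sh LG Xy.2); rewrite ey; exact: Xx.2.
  by move: ey; rewrite m0 /= => <-.
- move=> y Py; split; last exact: PX.
  exists y => //= i; rewrite ltnS leqn0 => /eqP -> /=.
  by exists 0 => //; exists y.
Qed.
Lemma markov1 (T : topologicalType) (h : RR -> T) (tau taui F : T -> T)
    (N : nat) (phi : nat -> RR -> T) (Ni : nat -> nat) (a b : nat -> nat -> RR)
    (ell : nat -> nat -> nat) (p : nat -> nat -> int) v B :
  lifted_graph h tau taui -> degree_one tau F -> sun_like h F N phi ->
  basic_partition h tau taui F N phi Ni a b ell p -> v <> [::] ->
  inP N Ni (last (0,0)%N v) ->
  cyl h tau taui F phi a b (rcons v B) =
  [set z | exists m y, [/\ cyl h tau taui F phi a b v y,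
      PZ tau taui phi a b B (F y) & z = Defs.shift tau taui m (F y)]] `&` Xset h F.
Proof.
move=> LG dF SL BP vn iL.
have [_ [_ _ c1 c2] _ _ _] := LG.
have PX := P_X LG SL BP iL.
set n := (size v).-1.
have sv : size v = n.+1 by rewrite /n; move: vn; case: (v) => //.
have nthL : nth (0,0)%N v n = last (0,0)%N v by rewrite -nth_last sv.
apply/seteqP; split.
- move=> _ [[x Hx <-] Xz]; split => //.
  rewrite size_rcons /= in Hx *.
  have := Hx n; rewrite nth_rcons sv ltnSn => /(_ (leqW (ltnSn n))).
  rewrite -sv nthL => -[m _ [y0 Py0 ey]].
  have Hx' : forall i, (i < size v)%N ->
      PZ tau taui phi a b (nth (0,0)%N v i) (iter i F (Defs.shift tau taui (- m) x)).
    move=> i Hi; rewrite sh_iter //.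
    apply: PZ_sh => //.
    have := Hx i (leqW Hi); by rewrite nth_rcons Hi.
  have ey0 : iter n F (Defs.shift tau taui (- m) x) = y0.
    by rewrite sh_iter // -ey sh_add // addNr.
  exists m, y0; split.
  + split; last exact: PX.
    by exists (Defs.shift tau taui (- m) x).
  + rewrite -ey0 -iterS sh_iter //; apply: PZ_sh => //.
    by have := Hx (size v) (ltnSn _); rewrite nth_rcons ltnn eqxx sv.
  + by rewrite -ey0 -iterS sh_iter // sh_add // subrr sv.
- move=> _ [[m [_ [[[x Hx <-] _] PB ->]]] Xz]; split => //.
  exists (Defs.shift tau taui m x); last first.
    by rewrite size_rcons /= sh_iter // sv.
  move=> i; rewrite size_rcons ltnS nth_rcons leq_eqVlt => /orP[/eqP ->|Hi].
  + rewrite ltnn eqxx sh_iter //; apply: PZ_sh => //.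
    by rewrite sv iterS.
  + by rewrite Hi sh_iter //; apply: PZ_sh => //; apply: Hx.
Qed.
Lemma markov_cat (T : topologicalType) (h : RR -> T) (tau taui F : T -> T)
    (N : nat) (phi : nat -> RR -> T) (Ni : nat -> nat) (a b : nat -> nat -> RR)
    (ell : nat -> nat -> nat) (p : nat -> nat -> int) r :
  lifted_graph h tau taui -> degree_one tau F -> sun_like h F N phi ->
  basic_partition h tau taui F N phi Ni a b ell p ->
  all (inP N Ni) r -> forall u v, u <> [::] -> v <> [::] ->
  inP N Ni (last (0,0)%N u) -> inP N Ni (last (0,0)%N v) ->
  cyl h tau taui F phi a b u = cyl h tau taui F phi a b v ->
  cyl h tau taui F phi a b (u ++ r) = cyl h tau taui F phi a b (v ++ r).
Proof.
move=> LG dF SL BP; elim: r => [|B r IH] /=; first by move=> _ u v; rewrite !cats0.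
move=> /andP[iB ar] u v un vn iu iv E.
rewrite -!cat_rcons; apply: IH => //.
- by case: (u) => [|? ?]; rewrite /rcons.
- by case: (v) => [|? ?]; rewrite /rcons.
- by rewrite last_rcons.
- by rewrite last_rcons.
- by rewrite (markov1 _ LG dF SL BP un iu) (markov1 _ LG dF SL BP vn iv) E.
Qed.

Lemma cat_split (X : Type) (x r x2 r2 : seq X) : x ++ r = x2 ++ r2 ->
  (exists t, x2 = x ++ t /\ r = t ++ r2) \/
  (exists e t, x = x2 ++ e :: t /\ r2 = e :: t ++ r).
Proof.
elim: x x2 => [|e x IH] [|e2 x2] /=.
- by move=> ->; left; exists [::].
- by move=> ->; left; exists (e2 :: x2).
- by move=> <-; right; exists e, x.
- case=> <- /IH [[t [-> ->]]|[e' [t [-> ->]]]].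
  + by left; exists t.
  + by right; exists e', t.
Qed.

Lemma take_rc (X : Type) (x s : seq X) c : take (size x).+1 (x ++ c :: s) = rcons x c.
Proof. by elim: x => [|e x IH] /=; [rewrite take0 | rewrite IH]. Qed.

Lemma nth_suffix (X : Type) (x0 : X) (x s : seq X) c i : (i <= size s)%N ->
  nth x0 (x ++ c :: s) (size x + size s - i) = nth x0 (c :: s) (size s - i).
Proof.
move=> Hi; rewrite nth_cat; case: ifP => H; first lia.
by congr nth; lia.
Qed.

Lemma sim_intro (T : topologicalType) (h : RR -> T) (tau taui F : T -> T)
    (phi : nat -> RR -> T) (a b : nat -> nat -> RR) x y c s :
  cyl h tau taui F phi a b (rcons x c) = Pset phi a b c ->
  cyl h tau taui F phi a b (rcons y c) = Pset phi a b c ->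
  sim h tau taui F phi a b (x ++ c :: s) (y ++ c :: s).
Proof.
move=> gx gy; rewrite /sim; exists (size s).
rewrite !size_cat /= !addnS /= !addnK.
have nx : nth (0,0)%N (x ++ c :: s) (size x) = c by rewrite nth_cat ltnn subnn.
have ny : nth (0,0)%N (y ++ c :: s) (size y) = c by rewrite nth_cat ltnn subnn.
split.
- lia.
- by move=> i Hi; rewrite !nth_suffix.
- by rewrite take_rc nx.
- by rewrite nx ny.
- by rewrite take_rc ny.
Qed.

Lemma sim_elim (T : topologicalType) (h : RR -> T) (tau taui F : T -> T)
    (phi : nat -> RR -> T) (a b : nat -> nat -> RR) w v :
  w <> [::] -> v <> [::] -> sim h tau taui F phi a b w v ->
  exists x y c s, [/\ w = x ++ c :: s, v = y ++ c :: s,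
    cyl h tau taui F phi a b (rcons x c) = Pset phi a b c &
    cyl h tau taui F phi a b (rcons y c) = Pset phi a b c].
Proof.
move=> wn vn [k [Hk Hn Hw Hwv Hv]].
set n := (size w).-1 in Hk Hn Hw Hwv Hv.
set m := (size v).-1 in Hk Hn Hw Hwv Hv.
have sw : size w = n.+1 by rewrite /n; move: wn; case: (w).
have sv : size v = m.+1 by rewrite /m; move: vn; case: (v).
have kn : (k <= n)%N by lia.
have km : (k <= m)%N by lia.
have ltw : (n - k < size w)%N by lia.
have ltv : (m - k < size v)%N by lia.
have ec : nth (0,0)%N v (m - k) = nth (0,0)%N w (n - k) by rewrite Hn.
have ed : drop (m - k).+1 v = drop (n - k).+1 w.
  apply: (@eq_from_nth _ (0,0)%N); first by rewrite !size_drop; lia.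
  move=> j; rewrite size_drop => Hj; rewrite !nth_drop.
  have e1 : ((n - k).+1 + j = n - (k - j.+1))%N by lia.
  have e2 : ((m - k).+1 + j = m - (k - j.+1))%N by lia.
  rewrite e1 e2 Hn //; lia.
exists (take (n - k) w), (take (m - k) v), (nth (0,0)%N w (n - k)), (drop (n - k).+1 w).
split.
- by rewrite -drop_nth // cat_take_drop.
- by rewrite -ed -ec -drop_nth // cat_take_drop.
- by rewrite -take_nth.
- by rewrite -ec -take_nth // -Hv -Hwv.
Qed.
Lemma rcons_split (X : Type) (y t : seq X) c c2 :
  rcons (y ++ c :: t) c2 = rcons y c ++ rcons t c2.
Proof. by rewrite rcons_cat rcons_cons cat_rcons. Qed.

Lemma key (T : topologicalType) (h : RR -> T) (tau taui F : T -> T)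
    (N : nat) (phi : nat -> RR -> T) (Ni : nat -> nat) (a b : nat -> nat -> RR)
    (ell : nat -> nat -> nat) (p : nat -> nat -> int) x y c s B v :
  lifted_graph h tau taui -> degree_one tau F -> sun_like h F N phi ->
  basic_partition h tau taui F N phi Ni a b ell p ->
  all (inP N Ni) (x ++ c :: s) -> all (inP N Ni) (y ++ c :: s) -> inP N Ni B ->
  word N Ni v ->
  cyl h tau taui F phi a b (rcons x c) = Pset phi a b c ->
  cyl h tau taui F phi a b (rcons y c) = Pset phi a b c ->
  sim h tau taui F phi a b (rcons (x ++ c :: s) B) v ->
  sim h tau taui F phi a b (rcons (y ++ c :: s) B) v.
Proof.
move=> LG dF SL BP ax ay iB [vn av] g1 g2 Hs.
have rn : rcons (x ++ c :: s) B <> [::] by case: (x ++ c :: s).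
have [x2 [y2 [c2 [s2 [E1 E2 g3 g4]]]]] := sim_elim rn vn Hs.
have E : x ++ c :: rcons s B = x2 ++ c2 :: s2 by rewrite -E1 rcons_cat.
have aE : all (inP N Ni) (x2 ++ c2 :: s2).
  by rewrite -E all_cat /= all_rcons iB /=; move: ax; rewrite all_cat /= => /andP[-> /andP[-> ->]].
have ic : inP N Ni c by move: ax; rewrite all_cat /= => /andP[_ /andP[]].
have nn : forall (z : seq (nat * nat)) e, rcons z e <> [::] by move=> z e; case: z.
have gyx : cyl h tau taui F phi a b (rcons y c) = cyl h tau taui F phi a b (rcons x c).
  by rewrite g1 g2.
rewrite rcons_cat rcons_cons E2.
case: (cat_split E) => [[t [ex2 et]]|[e [t [ex et]]]].
- case: t ex2 et => [|e t'] ex2 et.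
  + case: et => ec es; rewrite -es -ec; apply: sim_intro => //.
    by rewrite ec.
  + case: et => ee et; rewrite et -cat_cons catA; apply: sim_intro => //.
    have art : all (inP N Ni) (rcons t' c2).
      by move: aE; rewrite ex2 -ee -catA all_cat all_cat /= all_rcons => /and3P[_ /andP[_ ->] /andP[-> _]].
    rewrite rcons_split (markov_cat LG dF SL BP art (nn y c) (nn x c) _ _ gyx) ?last_rcons //.
    by rewrite -rcons_split ee -ex2.
- case: et => ee es2; rewrite es2 -cat_cons catA; apply: sim_intro => //.
  have art : all (inP N Ni) (rcons t c).
    by move: ax; rewrite ex -catA all_cat /= all_cat /= all_rcons ic => /andP[_ /andP[_ /andP[-> _]]].
  have ie : inP N Ni c2 by move: aE; rewrite all_cat /= => /andP[_ /andP[-> _]].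
  rewrite rcons_split (markov_cat LG dF SL BP art (nn y2 c2) (nn x2 c2) _ _ (etrans g4 (esym g3))) ?last_rcons //.
  by rewrite -rcons_split ee -ex g1.
Qed.
Unset Implicit Arguments.
Theorem mainTheorem12 (T : topologicalType) (h : RR -> T) (tau taui F : T -> T)
    (N : nat) (phi : nat -> RR -> T) (Ni : nat -> nat) (a b : nat -> nat -> RR)
    (ell : nat -> nat -> nat) (p : nat -> nat -> int)
    (w : seq (nat * nat)) (be : set (seq (nat * nat))) :
  lifted_graph h tau taui ->
  continuous F ->
  degree_one tau F ->
  sun_like h F N phi ->
  basic_partition h tau taui F N phi Ni a b ell p ->
  vertex N Ni h tau taui F phi a b (cls N Ni h tau taui F phi a b w) ->
  word N Ni w ->
  arrow N Ni h tau taui F phi a b (cls N Ni h tau taui F phi a b w) be ->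
  exists A, inP N Ni A /\ be = cls N Ni h tau taui F phi a b (rcons w A).
Proof.
move=> LG cF dF SL BP _ ww [_ _ [w' [B [ww' iB e1 e2]]]].
exists B; split => //; rewrite e2.
have srefl : forall v, word N Ni v -> sim h tau taui F phi a b v v.
  move=> [|c s] [vn av] //; move: av => /= /andP[ic _].
  by apply: (@sim_intro _ _ _ _ _ _ _ _ [::] [::] c s); rewrite /= (cyl1 LG SL BP ic).
have : cls N Ni h tau taui F phi a b w w by split => //; apply: srefl.
rewrite e1 => -[_ sw].
have [x [y [c [s [ew' ew g1 g2]]]]] := sim_elim ww'.1 ww.1 sw.
have ax : all (inP N Ni) (x ++ c :: s) by rewrite -ew'; exact: ww'.2.
have ay : all (inP N Ni) (y ++ c :: s) by rewrite -ew; exact: ww.2.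
apply/seteqP; split => v [wv sv]; split => //; rewrite ?ew ?ew' in sv *.
- exact: (key LG dF SL BP ax ay iB wv g1 g2 sv).
- exact: (key LG dF SL BP ay ax iB wv g2 g1 sv).
Qed.
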